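(* In the multi-parameter setting described in the context, for every $\theta\in\Theta$ one has $H_\theta\le C_\Upsilon(\theta)$ in the sense of positive semidefinite order of $p\times p$ matrices, with equality if and only if $\bigl\langle \frac{\partial w_j}{\partial\theta^l}(\theta)\big|w_k(\theta)\bigr\rangle=0$ for all $l$ and all $j,k$ with $p_j(\theta)>0$ and $p_k(\theta)>0$.
   Context: Let $\Theta\subseteq\mathbb{R}^p$ be open and $D\ge1$. For $\theta=(\theta^1,\dots,\theta^p)\in\Theta$ let $\Phi_\theta$ be a quantum channel on $D\times D$ complex matrices and $\rho_0=|\psi_0\rangle\langle\psi_0|$ a fixed pure input state. Canonical Kraus operators are $D\times D$ matrices $\Upsilon_1(\theta),\dots,\Upsilon_D(\theta)$, differentiable in $\theta$, with $\sum_k\Upsilon_k^\dagger\Upsilon_k=\mathbb{I}$, $\Phi_\theta(\rho)=\sum_k\Upsilon_k\rho\Upsilon_k^\dagger$, and $\mathrm{tr}\{\Upsilon_k\rho_0\Upsilon_j^\dagger\}=\delta_{jk}p_k(\theta)$. Write $\Upsilon_k(\theta)|\psi_0\rangle=\sqrt{p_k(\theta)}|w_k(\theta)\rangle$ with $\{|w_k(\theta)\rangle\}$ an orthonormal basis of $\mathbb{C}^D$ differentiable in $\theta$; the output is $\rho_\theta=\sum_kp_k|w_k\rangle\langle w_k|$. Each $p_k$ is assumed either identically zero or strictly positive on $\Theta$. The multi-parameter Sarovar–Milburn bound is the $p\times p$ matrix with entries $C_\Upsilon(\theta)_{jk}=4\sum_l\mathrm{Re}\,\mathrm{tr}\{\frac{\partial\Upsilon_l}{\partial\theta^j}\rho_0(\frac{\partial\Upsilon_l}{\partial\theta^k})^\dagger\}$.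 The SLD quantum information is the $p\times p$ matrix with entries $(H_\theta)_{jk}=\mathrm{Re}\,\mathrm{tr}\{\lambda^j\rho_\theta\lambda^k\}$, where $\lambda^j$ is a Hermitian solution of $\frac{\partial\rho_\theta}{\partial\theta^j}=\frac12(\rho_\theta\lambda^j+\lambda^j\rho_\theta)$. *)

(* Defs.v *)
From HB Require Import structures.
From mathcomp Require Import all_boot all_order all_algebra.
From mathcomp Require Import all_classical all_reals all_analysis.
From mathcomp Require Import complex.

Set Implicit Arguments.
Unset Strict Implicit.
Unset Printing Implicit Defensive.
Import Order.TTheory GRing.Theory Num.Theory.
Import numFieldNormedType.Exports.
Local Open Scope ring_scope.

Section Defs.
Variable R : realType.

Definition mxadj (m n : nat) (A : 'M[R[i]]_(m, n)) : 'M[R[i]]_(n, m) :=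
  (map_mx (@conjc R) A)^T.

Definition braket (D : nat) (u v : 'cV[R[i]]_D) : R[i] := (mxadj u *m v) 0 0.

Definition ebasis (p : nat) (j : 'I_p) : 'rV[R]_p := delta_mx 0 j.

Definition c_differentiable (p : nat) (f : 'rV[R]_p -> R[i]) (th : 'rV[R]_p) :=
  differentiable (fun t => @complex.Re R (f t)) th /\ differentiable (fun t => @complex.Im R (f t)) th.

Definition pderC (p : nat) (f : 'rV[R]_p -> R[i]) (th : 'rV[R]_p) (j : 'I_p)
  : R[i] :=
  Complex ('D_(ebasis j) (fun t => @complex.Re R (f t)) th)
          ('D_(ebasis j) (fun t => @complex.Im R (f t)) th).

Definition cmx_differentiable (p m n : nat) (F : 'rV[R]_p -> 'M[R[i]]_(m, n))
  (th : 'rV[R]_p) := forall a b, c_differentiable (fun t => F t a b) th.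

Definition pderM (p m n : nat) (F : 'rV[R]_p -> 'M[R[i]]_(m, n))
  (th : 'rV[R]_p) (j : 'I_p) : 'M[R[i]]_(m, n) :=
  \matrix_(a, b) pderC (fun t => F t a b) th j.

Definition psd_le (p : nat) (A B : 'M[R]_p) : Prop :=
  forall x : 'rV[R]_p, 0 <= (x *m (B - A) *m x^T) 0 0.

Definition pure_state (D : nat) (psi0 : 'cV[R[i]]_D) : 'M[R[i]]_D :=
  psi0 *m mxadj psi0.

Definition out_state (p D : nat) (Ups : 'I_D -> 'rV[R]_p -> 'M[R[i]]_D)
  (rho0 : 'M[R[i]]_D) (th : 'rV[R]_p) : 'M[R[i]]_D :=
  \sum_(k < D) (Ups k th *m rho0 *m mxadj (Ups k th)).

Definition is_SLD (p D : nat) (rho : 'rV[R]_p -> 'M[R[i]]_D) (th : 'rV[R]_p)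
  (j : 'I_p) (lam : 'M[R[i]]_D) : Prop :=
  mxadj lam = lam /\
  pderM rho th j = (2%:R : R[i])^-1 *: (rho th *m lam + lam *m rho th).

Definition SLD_info (p D : nat) (rho : 'M[R[i]]_D) (lam : 'I_p -> 'M[R[i]]_D)
  : 'M[R]_p :=
  \matrix_(j, k) @complex.Re R (\tr (lam j *m rho *m lam k)).

Definition SM_bound (p D : nat) (Ups : 'I_D -> 'rV[R]_p -> 'M[R[i]]_D)
  (rho0 : 'M[R[i]]_D) (th : 'rV[R]_p) : 'M[R]_p :=
  \matrix_(j, k) (4%:R * \sum_(l < D)
     @complex.Re R (\tr (pderM (Ups l) th j *m rho0 *m mxadj (pderM (Ups l) th k)))).

End Defs.

(* Main.v *)
Require Import Defs.
From HB Require Import structures.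
From mathcomp Require Import all_boot all_order all_algebra.
From mathcomp Require Import all_classical all_reals all_analysis.
From mathcomp Require Import complex.
From mathcomp Require Import ring lra.
Import Order.TTheory GRing.Theory Num.Theory.
Import numFieldNormedType.Exports.
Local Open Scope ring_scope.
Set Implicit Arguments.
Unset Strict Implicit.
Unset Printing Implicit Defensive.


Section Calc.
Variables (R : realType) (p : nat) (th : 'rV[R]_p) (j : 'I_p).
Local Notation V := 'rV[R]_p.

Definition cder (f : V -> R[i]) :=
  derivable (fun t => complex.Re (f t)) th (ebasis R j) /\
  derivable (fun t => complex.Im (f t)) th (ebasis R j).

Lemma funRe_add (f g : V -> R[i]) :
  (fun t => complex.Re (f t + g t)) = (fun t => complex.Re (f t)) + (fun t => complex.Re (g t)).
Proof. by apply: funext => t; rewrite !fctE; case: (f t) => ? ?; case: (g t). Qed.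
Lemma funIm_add (f g : V -> R[i]) :
  (fun t => complex.Im (f t + g t)) = (fun t => complex.Im (f t)) + (fun t => complex.Im (g t)).
Proof. by apply: funext => t; rewrite !fctE; case: (f t) => ? ?; case: (g t). Qed.

Lemma cder_add f g : cder f -> cder g -> cder (fun t => f t + g t).
Proof.
move=> [f1 f2] [g1 g2]; split; [rewrite funRe_add|rewrite funIm_add].
  exact: (derivableD f1 g1).
exact: (derivableD f2 g2).
Qed.

Lemma pderC_add f g : cder f -> cder g ->
  pderC (fun t => f t + g t) th j = pderC f th j + pderC g th j.
Proof.
move=> [f1 f2] [g1 g2]; rewrite /pderC funRe_add funIm_add (deriveD f1 g1) (deriveD f2 g2).
reflexivity.
Qed.

Lemma funRe_mul (f g : V -> R[i]) :
  (fun t => complex.Re (f t * g t)) = (fun t => complex.Re (f t)) * (fun t => complex.Re (g t))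
     - (fun t => complex.Im (f t)) * (fun t => complex.Im (g t)).
Proof. by apply: funext => t; rewrite !fctE; case: (f t) => ? ?; case: (g t). Qed.
Lemma funIm_mul (f g : V -> R[i]) :
  (fun t => complex.Im (f t * g t)) = (fun t => complex.Re (f t)) * (fun t => complex.Im (g t))
     + (fun t => complex.Im (f t)) * (fun t => complex.Re (g t)).
Proof. by apply: funext => t; rewrite !fctE; case: (f t) => ? ?; case: (g t). Qed.

Lemma cder_mul f g : cder f -> cder g -> cder (fun t => f t * g t).
Proof.
move=> [f1 f2] [g1 g2]; split; [rewrite funRe_mul|rewrite funIm_mul].
  exact: (derivableB (derivableM f1 g1) (derivableM f2 g2)).
exact: (derivableD (derivableM f1 g2) (derivableM f2 g1)).
Qed.

Lemma pderC_mul f g : cder f -> cder g ->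
  pderC (fun t => f t * g t) th j = pderC f th j * g th + f th * pderC g th j.
Proof.
move=> [f1 f2] [g1 g2]; rewrite /pderC funRe_mul funIm_mul.
rewrite (deriveB (derivableM f1 g1) (derivableM f2 g2)).
rewrite (deriveD (derivableM f1 g2) (derivableM f2 g1)).
rewrite (deriveM f1 g1) (deriveM f2 g2) (deriveM f1 g2) (deriveM f2 g1).
move: ('D_(ebasis R j) (fun t => complex.Re (f t)) th) => a'.
move: ('D_(ebasis R j) (fun t => complex.Im (f t)) th) => b'.
move: ('D_(ebasis R j) (fun t => complex.Re (g t)) th) => c'.
move: ('D_(ebasis R j) (fun t => complex.Im (g t)) th) => d'.
rewrite /=.
case: (f th) => a b; case: (g th) => c d /=.
congr Complex; rewrite /GRing.scale /=; ring.
Qed.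

Lemma cder_cst (c : R[i]) : cder (fun _ => c).
Proof. split; exact: derivable_cst. Qed.

Lemma pderC_cst (c : R[i]) : pderC (fun _ => c) th j = 0.
Proof.
rewrite /pderC.
have -> : (fun _ : V => complex.Re c) = cst (complex.Re c) by [].
have -> : (fun _ : V => complex.Im c) = cst (complex.Im c) by [].
by rewrite !derive_cst.
Qed.

Lemma funIm_conj (f : V -> R[i]) :
  (fun t => complex.Im (conjc (f t))) = - (fun t => complex.Im (f t)).
Proof. by apply: funext => t; rewrite !fctE; case: (f t). Qed.
Lemma funRe_conj (f : V -> R[i]) :
  (fun t => complex.Re (conjc (f t))) = (fun t => complex.Re (f t)).
Proof. by apply: funext => t; case: (f t). Qed.

Lemma cder_conj f : cder f -> cder (fun t => conjc (f t)).
Proof.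
move=> [f1 f2]; split; [rewrite funRe_conj|rewrite funIm_conj].
  exact: f1.
exact: (derivableN f2).
Qed.

Lemma pderC_conj f : cder f -> pderC (fun t => conjc (f t)) th j = conjc (pderC f th j).
Proof.
move=> [f1 f2]; rewrite /pderC funRe_conj funIm_conj (deriveN f2).
reflexivity.
Qed.

Lemma cder_sum (I : Type) (r : seq I) (F : I -> V -> R[i]) :
  (forall i, cder (F i)) -> cder (fun t => \sum_(i <- r) F i t).
Proof.
move=> dF; elim: r => [|x r IH].
  have -> : (fun t => \sum_(i <- [::]) F i t) = (fun _ => 0).
    by apply: funext => t; rewrite big_nil.
  exact: cder_cst.
have -> : (fun t => \sum_(i <- x :: r) F i t) = (fun t => F x t + \sum_(i <- r) F i t).
  by apply: funext => t; rewrite big_cons.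
exact: (cder_add (dF x) IH).
Qed.

Lemma pderC_sum (I : Type) (r : seq I) (F : I -> V -> R[i]) :
  (forall i, cder (F i)) ->
  pderC (fun t => \sum_(i <- r) F i t) th j = \sum_(i <- r) pderC (F i) th j.
Proof.
move=> dF; elim: r => [|x r IH].
  have -> : (fun t => \sum_(i <- [::]) F i t) = (fun _ => 0).
    by apply: funext => t; rewrite big_nil.
  by rewrite pderC_cst big_nil.
have -> : (fun t => \sum_(i <- x :: r) F i t) = (fun t => F x t + \sum_(i <- r) F i t).
  by apply: funext => t; rewrite big_cons.
rewrite (pderC_add (dF x) (cder_sum r dF)) IH big_cons.
reflexivity.
Qed.

Lemma cder_diff f : c_differentiable f th -> cder f.
Proof. move=> [d1 d2]; split; exact: diff_derivable. Qed.

Lemma cder_near f g : (\forall t \near th, f t = g t) -> cder f -> cder g.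
Proof.
move=> fg [f1 f2]; split.
  apply: (near_eq_derivable _ f1); apply: filterS fg => t /= ->; reflexivity.
apply: (near_eq_derivable _ f2); apply: filterS fg => t /= ->; reflexivity.
Qed.

Lemma pderC_near f g : (\forall t \near th, f t = g t) -> pderC f th j = pderC g th j.
Proof.
move=> fg; rewrite /pderC.
rewrite (near_eq_derive _ (g := fun t => complex.Re (g t))); last first.
  apply: filterS fg => t /= ->; reflexivity.
rewrite (near_eq_derive _ (f := fun t => complex.Im (f t)) (g := fun t => complex.Im (g t))); last first.
  apply: filterS fg => t /= ->; reflexivity.
reflexivity.
Qed.

Lemma cder_real (r : V -> R) : derivable r th (ebasis R j) -> cder (fun t => Complex (r t) 0).
Proof. move=> dr; split; [exact: dr| exact: derivable_cst]. Qed.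

Lemma pderC_real (r : V -> R) : derivable r th (ebasis R j) ->
  pderC (fun t => Complex (r t) 0) th j = Complex ('D_(ebasis R j) r th) 0.
Proof.
move=> dr; rewrite /pderC.
have -> : (fun t : V => complex.Im (Complex (r t) 0)) = cst 0 by [].
rewrite derive_cst; reflexivity.
Qed.


Definition cmder m n (F : V -> 'M[R[i]]_(m,n)) := forall a b, cder (fun t => F t a b).

Lemma cmder_diff m n (F : V -> 'M[R[i]]_(m,n)) : cmx_differentiable F th -> cmder F.
Proof. move=> dF a b; exact: cder_diff (dF a b). Qed.

Lemma cmder_cst m n (M : 'M[R[i]]_(m,n)) : cmder (fun _ => M).
Proof. move=> a b; exact: cder_cst. Qed.

Lemma pderM_cst m n (M : 'M[R[i]]_(m,n)) : pderM (fun _ => M) th j = 0.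
Proof. by apply/matrixP => a b; rewrite !mxE pderC_cst. Qed.

Lemma mulmx_fun m n q (F : V -> 'M[R[i]]_(m,n)) (G : V -> 'M[R[i]]_(n,q)) a b :
  (fun t => (F t *m G t) a b) = (fun t => \sum_(c < n) F t a c * G t c b).
Proof. by apply: funext => t; rewrite mxE. Qed.

Lemma cmder_mul m n q (F : V -> 'M[R[i]]_(m,n)) (G : V -> 'M[R[i]]_(n,q)) :
  cmder F -> cmder G -> cmder (fun t => F t *m G t).
Proof.
move=> dF dG a b; rewrite mulmx_fun; apply: cder_sum => c.
exact: (cder_mul (dF a c) (dG c b)).
Qed.

Lemma pderM_mul m n q (F : V -> 'M[R[i]]_(m,n)) (G : V -> 'M[R[i]]_(n,q)) :
  cmder F -> cmder G ->
  pderM (fun t => F t *m G t) th j = pderM F th j *m G th + F th *m pderM G th j.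
Proof.
move=> dF dG; apply/matrixP => a b; rewrite !mxE mulmx_fun.
rewrite (pderC_sum _ (fun c => cder_mul (dF a c) (dG c b))).
rewrite -big_split /=; apply: eq_bigr => c _.
by rewrite (pderC_mul (dF a c) (dG c b)) !mxE.
Qed.

Lemma adj_fun m n (F : V -> 'M[R[i]]_(m,n)) a b :
  (fun t => (mxadj (F t)) a b) = (fun t => conjc (F t b a)).
Proof. by apply: funext => t; rewrite /mxadj !mxE. Qed.

Lemma cmder_adj m n (F : V -> 'M[R[i]]_(m,n)) : cmder F -> cmder (fun t => mxadj (F t)).
Proof. move=> dF a b; rewrite adj_fun; exact: cder_conj (dF b a). Qed.

Lemma pderM_adj m n (F : V -> 'M[R[i]]_(m,n)) : cmder F ->
  pderM (fun t => mxadj (F t)) th j = mxadj (pderM F th j).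
Proof.
move=> dF; apply/matrixP => a b; rewrite /mxadj !mxE.
rewrite -/(mxadj _) adj_fun (pderC_conj (dF b a)); reflexivity.
Qed.

Lemma sum_fun m n (I : Type) (r : seq I) (F : I -> V -> 'M[R[i]]_(m,n)) a b :
  (fun t => (\sum_(k <- r) F k t) a b) = (fun t => \sum_(k <- r) F k t a b).
Proof. by apply: funext => t; rewrite summxE. Qed.

Lemma cmder_sum m n (I : Type) (r : seq I) (F : I -> V -> 'M[R[i]]_(m,n)) :
  (forall k, cmder (F k)) -> cmder (fun t => \sum_(k <- r) F k t).
Proof. move=> dF a b; rewrite sum_fun; apply: cder_sum => k; exact: dF. Qed.

Lemma pderM_sum m n (I : Type) (r : seq I) (F : I -> V -> 'M[R[i]]_(m,n)) :
  (forall k, cmder (F k)) ->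
  pderM (fun t => \sum_(k <- r) F k t) th j = \sum_(k <- r) pderM (F k) th j.
Proof.
move=> dF; apply/matrixP => a b; rewrite summxE !mxE sum_fun.
rewrite (pderC_sum _ (fun k => dF k a b)); apply: eq_bigr => k _; by rewrite mxE.
Qed.

Lemma scale_fun m n (c : V -> R[i]) (F : V -> 'M[R[i]]_(m,n)) a b :
  (fun t => (c t *: F t) a b) = (fun t => c t * F t a b).
Proof. by apply: funext => t; rewrite mxE. Qed.

Lemma cmder_scale m n (c : V -> R[i]) (F : V -> 'M[R[i]]_(m,n)) :
  cder c -> cmder F -> cmder (fun t => c t *: F t).
Proof. move=> dc dF a b; rewrite scale_fun; exact: cder_mul dc (dF a b). Qed.

Lemma pderM_scale m n (c : V -> R[i]) (F : V -> 'M[R[i]]_(m,n)) :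
  cder c -> cmder F ->
  pderM (fun t => c t *: F t) th j = pderC c th j *: F th + c th *: pderM F th j.
Proof.
move=> dc dF; apply/matrixP => a b; rewrite !mxE scale_fun (pderC_mul dc (dF a b)).
by rewrite ?mxE.
Qed.

Lemma cmder_near m n (F G : V -> 'M[R[i]]_(m,n)) :
  (\forall t \near th, F t = G t) -> cmder F -> cmder G.
Proof.
move=> FG dF a b; apply: (cder_near _ (dF a b)); apply: filterS FG => t /= ->; reflexivity.
Qed.

Lemma pderM_near m n (F G : V -> 'M[R[i]]_(m,n)) :
  (\forall t \near th, F t = G t) -> pderM F th j = pderM G th j.
Proof.
move=> FG; apply/matrixP => a b; rewrite !mxE; apply: pderC_near.
apply: filterS FG => t /= ->; reflexivity.
Qed.

End Calc.


Section Alg.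
Variable R : realType.
Local Notation C := (R[i]).

Lemma mxadjE m n (A : 'M[C]_(m,n)) a b : mxadj A a b = conjc (A b a).
Proof. by rewrite /mxadj !mxE. Qed.

Lemma mxadjM m n q (A : 'M[C]_(m,n)) (B : 'M[C]_(n,q)) :
  mxadj (A *m B) = mxadj B *m mxadj A.
Proof.
apply/matrixP => a b; rewrite !mxE rmorph_sum /=; apply: eq_bigr => c _.
by rewrite !mxadjE rmorphM /= mulrC.
Qed.

Lemma mxadjK m n (A : 'M[C]_(m,n)) : mxadj (mxadj A) = A.
Proof. by apply/matrixP => a b; rewrite !mxadjE conjcK. Qed.

Lemma mxadjD m n (A B : 'M[C]_(m,n)) : mxadj (A + B) = mxadj A + mxadj B.
Proof. by apply/matrixP => a b; rewrite [RHS]mxE !mxadjE mxE rmorphD. Qed.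

Lemma mxadjZ m n (c : C) (A : 'M[C]_(m,n)) : mxadj (c *: A) = conjc c *: mxadj A.
Proof. by apply/matrixP => a b; rewrite [RHS]mxE !mxadjE mxE rmorphM. Qed.

Lemma braketE D (u v : 'cV[C]_D) : braket u v = \sum_a conjc (u a 0) * v a 0.
Proof. by rewrite /braket mxE; apply: eq_bigr => a _; rewrite mxadjE. Qed.

Lemma braket_mulr D (u v : 'cV[C]_D) (M : 'M[C]_D) :
  braket u (M *m v) = braket (mxadj M *m u) v.
Proof. by rewrite /braket mxadjM mxadjK mulmxA. Qed.

Lemma braket_conj D (u v : 'cV[C]_D) : conjc (braket u v) = braket v u.
Proof.
rewrite !braketE rmorph_sum /=; apply: eq_bigr => a _.
by rewrite rmorphM /= conjcK mulrC.
Qed.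

Lemma braketDr D (u v1 v2 : 'cV[C]_D) : braket u (v1 + v2) = braket u v1 + braket u v2.
Proof. by rewrite /braket mulmxDr mxE. Qed.

Lemma braketDl D (u1 u2 v : 'cV[C]_D) : braket (u1 + u2) v = braket u1 v + braket u2 v.
Proof. by rewrite /braket mxadjD mulmxDl mxE. Qed.

Lemma braketZr D (u v : 'cV[C]_D) c : braket u (c *: v) = c * braket u v.
Proof. by rewrite /braket -scalemxAr mxE. Qed.

Lemma braketZl D (u v : 'cV[C]_D) c : braket (c *: u) v = conjc c * braket u v.
Proof. by rewrite /braket mxadjZ -scalemxAl mxE. Qed.

Lemma braket0r D (u : 'cV[C]_D) : braket u 0 = 0.
Proof. by rewrite /braket mulmx0 mxE. Qed.

Lemma braket_sumr D (I : Type) (r : seq I) (u : 'cV[C]_D) (F : I -> 'cV[C]_D) :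
  braket u (\sum_(k <- r) F k) = \sum_(k <- r) braket u (F k).
Proof.
elim: r => [|x r IH]; first by rewrite !big_nil braket0r.
by rewrite !big_cons braketDr IH.
Qed.

Lemma braket_outer D (a u v b : 'cV[C]_D) :
  braket a ((u *m mxadj v) *m b) = braket a u * braket v b.
Proof.
rewrite -mulmxA.
have -> : mxadj v *m b = (braket v b)%:M.
  apply/matrixP => i k; rewrite !ord1 /braket !mxE /=; reflexivity.
by rewrite mul_mx_scalar braketZr mulrC.
Qed.

Lemma trace_outer D (A B : 'M[C]_D) (u v : 'cV[C]_D) :
  \tr (A *m (u *m mxadj v) *m B) = braket v (B *m (A *m u)).
Proof.
rewrite mulmxA -mulmxA mxtrace_mulC /braket mulmxA.
rewrite /mxtrace big_ord1; reflexivity.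
Qed.

Section Basis.
Variables (D : nat) (w : 'I_D -> 'cV[C]_D).
Hypothesis won : forall m n, braket (w m) (w n) = (if m == n then 1 else 0).

Let W := \matrix_(a, k) w k a 0.

Lemma adjW_mul (u : 'cV[C]_D) m : (mxadj W *m u) m 0 = braket (w m) u.
Proof. by rewrite mxE braketE; apply: eq_bigr => a _; rewrite mxadjE mxE. Qed.

Lemma WadjW : W *m mxadj W = 1%:M.
Proof.
apply: mulmx1C; apply/matrixP => m n.
have -> : (mxadj W *m W) m n = braket (w m) (w n).
  rewrite mxE braketE; apply: eq_bigr => a _; by rewrite mxadjE !mxE.
by rewrite won mxE; case: (m == n).
Qed.

Lemma parseval (u v : 'cV[C]_D) :
  braket u v = \sum_m conjc (braket (w m) u) * braket (w m) v.
Proof.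
have -> : braket u v = braket (mxadj W *m u) (mxadj W *m v).
  by rewrite braket_mulr mxadjK mulmxA WadjW mul1mx.
rewrite braketE; apply: eq_bigr => m _; by rewrite !adjW_mul.
Qed.
End Basis.

End Alg.


Section Core.
Variable R : realType.
Local Notation C := (R[i]).

Lemma pair_id (sm sn : R) (aj ak bj bk lj lk : C) :
  sm ^+ 2 + sn ^+ 2 != 0 ->
  Complex (sm ^+ 2 + sn ^+ 2) 0 * lj = 2%:R * (Complex sn 0 * aj + Complex sm 0 * conjc bj) ->
  Complex (sm ^+ 2 + sn ^+ 2) 0 * lk = 2%:R * (Complex sn 0 * ak + Complex sm 0 * conjc bk) ->
  2%:R * (complex.Re (conjc ak * aj) + complex.Re (conjc bk * bj))
   - (sm ^+ 2 + sn ^+ 2) / 2%:R * complex.Re (conjc lk * lj)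
  = 2%:R * complex.Re (conjc (Complex sm 0 * ak - Complex sn 0 * conjc bk)
                       * (Complex sm 0 * aj - Complex sn 0 * conjc bj)) / (sm ^+ 2 + sn ^+ 2).
Proof.
move=> q0.
case: aj => a1 a2; case: ak => c1 c2; case: bj => b1 b2; case: bk => d1 d2.
case: lj => l1 l2; case: lk => k1 k2.
rewrite /= => [[e1 e2] [f1 f2]].
set q := sm ^+ 2 + sn ^+ 2 in q0 e1 e2 f1 f2 *.
have El1 : l1 = 2%:R * (sn * a1 + sm * b1) / q.
  apply: (mulfI q0); transitivity (q * l1 - 0 * l2); first ring.
  rewrite e1; field; exact: q0.
have El2 : l2 = 2%:R * (sn * a2 - sm * b2) / q.
  apply: (mulfI q0); transitivity (q * l2 + 0 * l1); first ring.
  rewrite e2; field; exact: q0.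
have Ek1 : k1 = 2%:R * (sn * c1 + sm * d1) / q.
  apply: (mulfI q0); transitivity (q * k1 - 0 * k2); first ring.
  rewrite f1; field; exact: q0.
have Ek2 : k2 = 2%:R * (sn * c2 - sm * d2) / q.
  apply: (mulfI q0); transitivity (q * k2 + 0 * k1); first ring.
  rewrite f2; field; exact: q0.
rewrite El1 El2 Ek1 Ek2 /q; field.
exact: q0.
Qed.

Definition Ecore D (P : nat) (s : 'I_D -> R) (A : 'I_P -> 'I_D -> 'I_D -> C) j m n :=
  Complex (s m) 0 * A j m n - Complex (s n) 0 * conjc (A j n m).

Lemma Re_conj_swap (a b : C) : complex.Re (conjc (conjc a) * conjc b) = complex.Re (conjc a * b).
Proof. by case: a => ? ?; case: b => ? ? /=; ring. Qed.

Lemma core_id (P D : nat) (pr s : 'I_D -> R) (A L : 'I_P -> 'I_D -> 'I_D -> C) j k :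
  (forall n, pr n = s n ^+ 2) ->
  (forall j m n, pr n = 0 -> A j m n = 0) ->
  (forall j m n, Complex (pr m + pr n) 0 * L j m n =
     2%:R * (Complex (s n) 0 * A j m n + Complex (s m) 0 * conjc (A j n m))) ->
  (forall j m n, L j n m = conjc (L j m n)) ->
  4%:R * (\sum_l \sum_m complex.Re (conjc (A k m l) * A j m l))
  - \sum_n \sum_m pr n * complex.Re (conjc (L k m n) * L j m n)
  = \sum_m \sum_n 2%:R * complex.Re (conjc (Ecore s A k m n) * Ecore s A j m n) / (pr m + pr n).
Proof.
move=> hps hA0 hL hLh.
pose X m n := complex.Re (conjc (A k m n) * A j m n).
pose Y m n := complex.Re (conjc (L k m n) * L j m n).
have pr0 : forall n, 0 <= pr n by move=> n; rewrite hps sqr_ge0.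
have HY : forall m n, Y n m = Y m n.
  by move=> m n; rewrite /Y (hLh k m n) (hLh j m n) Re_conj_swap.
have pair : forall m n, 2%:R * complex.Re (conjc (Ecore s A k m n) * Ecore s A j m n) / (pr m + pr n)
   = 2%:R * (X m n + X n m) - (pr m + pr n) / 2%:R * Y m n.
  move=> m n; have [q0|q0] := eqVneq (pr m + pr n) 0.
    have /andP[/eqP pm0 /eqP pn0] : (pr m == 0) && (pr n == 0) by rewrite -(paddr_eq0 (pr0 m) (pr0 n)) q0.
    
    rewrite q0 /X /Ecore !(hA0 _ m n pn0) !(hA0 _ n m pm0) invr0 !mulr0 mul0r.
    have Re0 : complex.Re (0 : C) = 0 by [].
    rewrite Re0; ring.
  rewrite /Ecore /X /Y; symmetry.
  have hq : s m ^+ 2 + s n ^+ 2 != 0 by rewrite -!hps.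
  have := pair_id hq; rewrite -!hps; apply.
    exact: hL.
  exact: hL.
transitivity (\sum_m \sum_n (2%:R * (X m n + X n m) - (pr m + pr n) / 2%:R * Y m n)); last first.
  by apply: eq_bigr => m _; apply: eq_bigr => n _; rewrite pair.
rewrite [RHS](eq_bigr (fun m => 2%:R * \sum_n X m n + 2%:R * \sum_n X n m
                         - \sum_n (pr m + pr n) / 2%:R * Y m n)); last first.
  move=> m _; rewrite !mulr_sumr -big_split sumrB /=; congr (_ - _).
  by apply: eq_bigr => n _; ring.
rewrite [RHS]sumrB [in RHS]big_split /= -!mulr_sumr.
have hX1 : \sum_l \sum_m complex.Re (conjc (A k m l) * A j m l) = \sum_m \sum_n X m n.
  by rewrite exchange_big.
have hX2 : \sum_m \sum_n X n m = \sum_m \sum_n X m n.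
  by rewrite exchange_big.
have hYs : \sum_m \sum_n (pr m + pr n) / 2%:R * Y m n
     = \sum_n \sum_m pr n * complex.Re (conjc (L k m n) * L j m n).
  have S2 : \sum_m \sum_n pr n * Y m n = \sum_n \sum_m pr n * Y m n by rewrite exchange_big.
  have S3 : \sum_m \sum_n pr m * Y m n = \sum_n \sum_m pr n * Y m n.
    by apply: eq_bigr => m _; apply: eq_bigr => n _; rewrite HY.
  rewrite (eq_bigr (fun m => (\sum_n pr m * Y m n + \sum_n pr n * Y m n) / 2%:R)); last first.
    move=> m _; rewrite -big_split mulr_suml; apply: eq_bigr => n _ /=; ring.
  rewrite -mulr_suml big_split /= S2 S3 -/(Y _ _).
  by rewrite /Y; field.
rewrite hX1 hYs; move: hX2; lra.
Qed.

Lemma ReD (a b : C) : complex.Re (a + b) = complex.Re a + complex.Re b.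
Proof. by case: a => ? ?; case: b. Qed.

Lemma Re_sum (I : Type) (r : seq I) (F : I -> C) :
  complex.Re (\sum_(i <- r) F i) = \sum_(i <- r) complex.Re (F i).
Proof.
elim: r => [|x r IH]; first by rewrite !big_nil.
by rewrite !big_cons ReD IH.
Qed.

Lemma normsq_ge0 (z : C) : 0 <= complex.Re (conjc z * z).
Proof. case: z => a b /=; nra. Qed.

Lemma normsq_eq0 (z : C) : complex.Re (conjc z * z) = 0 -> z = 0.
Proof.
case: z => a b /= h.
have a0 : a = 0 by nra.
have b0 : b = 0 by nra.
by rewrite a0 b0.
Qed.

Lemma bilin_sq (P : nat) (E : 'I_P -> C) (x : 'I_P -> R) :
  \sum_j \sum_k x j * x k * complex.Re (conjc (E k) * E j)
  = complex.Re (conjc (\sum_k Complex (x k) 0 * E k) * (\sum_j Complex (x j) 0 * E j)).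
Proof.
rewrite rmorph_sum /= mulr_suml Re_sum exchange_big /=.
apply: eq_bigr => k _; rewrite mulr_sumr Re_sum; apply: eq_bigr => j _.
case: (E k) => a b; case: (E j) => c d /=; ring.
Qed.

Lemma psd_core (P D : nat) (E : 'I_P -> 'I_D -> 'I_D -> C) (q : 'I_D -> 'I_D -> R)
  (x : 'I_P -> R) :
  (forall m n, 0 <= q m n) ->
  0 <= \sum_j \sum_k x j * (\sum_m \sum_n 2%:R * complex.Re (conjc (E k m n) * E j m n) / q m n) * x k.
Proof.
move=> q0.
have -> : \sum_j \sum_k x j * (\sum_m \sum_n 2%:R * complex.Re (conjc (E k m n) * E j m n) / q m n) * x k
   = \sum_j \sum_k \sum_m \sum_n 2%:R / q m n * (x j * x k * complex.Re (conjc (E k m n) * E j m n)).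
  apply: eq_bigr => j' _; apply: eq_bigr => k' _.
  rewrite mulrC mulrA mulr_sumr; apply: eq_bigr => m _; rewrite mulr_sumr.
  by apply: eq_bigr => n _; ring.
have -> : \sum_j \sum_k \sum_m \sum_n 2%:R / q m n * (x j * x k * complex.Re (conjc (E k m n) * E j m n))
   = \sum_m \sum_n 2%:R / q m n * (\sum_j \sum_k x j * x k * complex.Re (conjc (E k m n) * E j m n)).
  under eq_bigr do rewrite exchange_big.
  rewrite exchange_big; apply: eq_bigr => m _.
  under eq_bigr do rewrite exchange_big.
  rewrite exchange_big; apply: eq_bigr => n _.
  rewrite mulr_sumr; apply: eq_bigr => j' _; rewrite mulr_sumr; reflexivity.
apply: sumr_ge0 => m _; apply: sumr_ge0 => n _.
rewrite bilin_sq; apply: mulr_ge0; last exact: normsq_ge0.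
by apply: divr_ge0; [rewrite ler0n|exact: q0].
Qed.

Lemma eq_core (P D : nat) (E : 'I_P -> 'I_D -> 'I_D -> C) (q : 'I_D -> 'I_D -> R) j k :
  (forall m n, q m n != 0 -> E j m n = 0) ->
  \sum_m \sum_n 2%:R * complex.Re (conjc (E k m n) * E j m n) / q m n = 0.
Proof.
move=> hE; apply: big1 => m _; apply: big1 => n _.
have [->|qn] := eqVneq (q m n) 0; first by rewrite invr0 mulr0.
have Re0 : complex.Re (0 : C) = 0 by [].
by rewrite hE // mulr0 Re0 mulr0 mul0r.
Qed.

Lemma zero_core (P D : nat) (E : 'I_P -> 'I_D -> 'I_D -> C) (q : 'I_D -> 'I_D -> R) j :
  (forall m n, 0 <= q m n) ->
  \sum_m \sum_n 2%:R * complex.Re (conjc (E j m n) * E j m n) / q m n = 0 ->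
  forall m n, q m n != 0 -> E j m n = 0.
Proof.
move=> q0 hs m n qn.
have T0 : forall m n, 0 <= 2%:R * complex.Re (conjc (E j m n) * E j m n) / q m n.
  move=> m' n'; apply: divr_ge0; last exact: q0.
  apply: mulr_ge0; [by rewrite ler0n|exact: normsq_ge0].
have S0 : forall m, 0 <= \sum_n 2%:R * complex.Re (conjc (E j m n) * E j m n) / q m n.
  by move=> m'; apply: sumr_ge0 => n' _; exact: T0.
have := (psumr_eq0P (fun m _ => S0 m) hs) m isT.
move/(psumr_eq0P (fun n _ => T0 m n))/(_ n isT)/eqP.
rewrite mulf_eq0 invr_eq0 (negPf qn) orbF mulf_eq0 pnatr_eq0 /= => /eqP.
exact: normsq_eq0.
Qed.
End Core.

Section Main.
Variables (R : realType) (p D : nat) (Theta : set 'rV[R]_p)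
  (Ups : 'I_D -> 'rV[R]_p -> 'M[R[i]]_D) (psi0 : 'cV[R[i]]_D)
  (pr : 'I_D -> 'rV[R]_p -> R) (w : 'I_D -> 'rV[R]_p -> 'cV[R[i]]_D).
Hypothesis hTh : open Theta.
Hypothesis hUd : forall k th, Theta th -> cmx_differentiable (Ups k) th.
Hypothesis hwd : forall k th, Theta th -> cmx_differentiable (w k) th.
Hypothesis hUw : forall th k, Theta th ->
     Ups k th *m psi0 = Complex (Num.sqrt (pr k th)) 0 *: w k th.
Hypothesis hwon : forall th j k, Theta th ->
     braket (w j th) (w k th) = (if j == k then 1 else 0).
Hypothesis hpk : forall k, (forall th, Theta th -> pr k th = 0) \/
             (forall th, Theta th -> 0 < pr k th).
Variable th : 'rV[R]_p.
Hypothesis thT : Theta th.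
Variable lam : 'I_p -> 'M[R[i]]_D.
Hypothesis hSLD : forall j, is_SLD (out_state Ups (pure_state psi0)) th j (lam j).

Local Notation s k := (Num.sqrt (pr k th)).
Local Notation f k := (Ups k th *m psi0).
Local Notation vv l k := (pderM (Ups k) th l *m psi0).
Local Notation Ww l k := (pderM (w k) th l).
Local Notation ww k := (w k th).
Local Notation rho := (out_state Ups (pure_state psi0)).

Lemma nTh : \forall t \near th, Theta t.
Proof. exact: (open_nbhs_nbhs (conj hTh thT)). Qed.

Lemma pr_ge0 k : 0 <= pr k th.
Proof. by case: (hpk k) => h; [rewrite h|apply/ltW/h]. Qed.

Lemma pr_sq k : pr k th = s k ^+ 2.
Proof. by rewrite sqr_sqrtr // pr_ge0. Qed.

Lemma dU l k : cmder th l (Ups k).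
Proof. exact: cmder_diff (hUd k thT). Qed.

Lemma dw l k : cmder th l (w k).
Proof. exact: cmder_diff (hwd k thT). Qed.

Lemma dUpsi l k : pderM (fun t => Ups k t *m psi0) th l = vv l k.
Proof. by rewrite (pderM_mul (dU l k) (cmder_cst _ _ _)) pderM_cst mulmx0 addr0. Qed.

Lemma rho_th : rho th = \sum_k f k *m mxadj (f k).
Proof.
rewrite /out_state /pure_state; apply: eq_bigr => k _.
by rewrite mxadjM !mulmxA.
Qed.

Lemma drho l : pderM rho th l = \sum_k (vv l k *m mxadj (f k) + f k *m mxadj (vv l k)).
Proof.
have dk : forall k, cmder th l (fun t => Ups k t *m pure_state psi0 *m mxadj (Ups k t)).
  move=> k; apply: cmder_mul; last exact: cmder_adj (dU l k).
  exact: cmder_mul (dU l k) (cmder_cst _ _ _).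
rewrite /out_state (pderM_sum _ dk); apply: eq_bigr => k _.
rewrite (pderM_mul (cmder_mul (dU l k) (cmder_cst _ _ _)) (cmder_adj (dU l k))).
rewrite (pderM_mul (dU l k) (cmder_cst _ _ _)) pderM_cst mulmx0 addr0.
rewrite (pderM_adj (dU l k)) /pure_state !mxadjM !mulmxA.
by [].
Qed.


Lemma v0 l k : pr k th = 0 -> vv l k = 0.
Proof.
move=> pk0; rewrite -dUpsi.
have hz : forall t, Theta t -> pr k t = 0.
  case: (hpk k) => // h; by have := h th thT; rewrite pk0 ltxx.
have hnear : \forall t \near th, Ups k t *m psi0 = (fun _ => 0 : 'cV[R[i]]_D) t.
  apply: filterS nTh => t Tt /=.
  by rewrite (hUw k Tt) (hz t Tt) sqrtr0 complexr0 rmorph0 scale0r.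
by rewrite (pderM_near l hnear) pderM_cst.
Qed.

Lemma vpos l k : 0 < pr k th ->
  vv l k = Complex ('D_(ebasis R l) (fun t => Num.sqrt (pr k t)) th) 0 *: ww k + Complex (s k) 0 *: Ww l k.
Proof.
move=> pk.
pose bk := fun t => (mxadj (w k t) *m (Ups k t *m psi0)) 0 0.
have cb : cder th l bk.
  exact: (cmder_mul (cmder_adj (dw l k)) (cmder_mul (dU l k) (cmder_cst _ _ _)) 0 0).
have dsq : derivable (fun t => Num.sqrt (pr k t)) th (ebasis R l).
  apply: (near_eq_derivable _ (proj1 cb)).
  apply: filterS nTh => t Tt /=.
  rewrite /bk (hUw k Tt).
  have -> : (mxadj (w k t) *m (Complex (Num.sqrt (pr k t)) 0 *: w k t)) 0 0
      = braket (w k t) (Complex (Num.sqrt (pr k t)) 0 *: w k t) by [].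
  by rewrite braketZr (hwon k k Tt) eqxx mulr1.
have fn : \forall t \near th, Ups k t *m psi0 = Complex (Num.sqrt (pr k t)) 0 *: w k t.
  apply: filterS nTh => t Tt; exact: hUw k Tt.
rewrite -dUpsi (pderM_near l fn) (pderM_scale (cder_real dsq) (dw l k)) (pderC_real dsq).
by [].
Qed.

Lemma anti l m n : braket (ww m) (Ww l n) + conjc (braket (ww n) (Ww l m)) = 0.
Proof.
have hn : \forall t \near th, mxadj (w m t) *m w n t = const_mx (if m == n then 1 else 0).
  apply: filterS nTh => t Tt; apply/matrixP => a b; rewrite !ord1 [RHS]mxE.
  exact: (hwon m n Tt).
have := pderM_near l hn.
rewrite pderM_cst (pderM_mul (cmder_adj (dw l m)) (dw l n)) (pderM_adj (dw l m)).
move=> /(congr1 (fun M : 'M[R[i]]_1 => M 0 0)) /=.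
rewrite [X in X = _ -> _]mxE [X in _ = X -> _]mxE => e.
rewrite braket_conj addrC; exact: e.
Qed.


Local Notation cr x := ((x)%:C)%C.

Lemma fC k : f k = cr (s k) *: ww k.
Proof. by rewrite (hUw k thT) complexr0. Qed.

Lemma won m n : braket (ww m) (ww n) = (if m == n then 1 else 0).
Proof. exact: hwon m n thT. Qed.

Lemma sum_delta_r (F : 'I_D -> R[i]) n :
  \sum_k F k * (if k == n then 1 else 0) = F n.
Proof.
rewrite (bigD1 n) //= eqxx mulr1 big1 ?addr0 // => k /negPf ->; by rewrite mulr0.
Qed.

Lemma sum_delta_l (F : 'I_D -> R[i]) m :
  \sum_k (if m == k then 1 else 0) * F k = F m.
Proof.
rewrite (bigD1 m) //= eqxx mul1r big1 ?addr0 // => k; rewrite eq_sym => /negPf ->; by rewrite mul0r.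
Qed.

Lemma crs2 k : cr (s k) * cr (s k) = cr (pr k th).
Proof. by rewrite -rmorphM /= -expr2 -pr_sq. Qed.

Lemma rho_left m (x : 'cV[R[i]]_D) : braket (ww m) (rho th *m x) = cr (pr m th) * braket (ww m) x.
Proof.
rewrite rho_th mulmx_suml braket_sumr.
rewrite (eq_bigr (fun k => (if m == k then 1 else 0) * (cr (s k) * (cr (s k) * braket (ww k) x)))).
  by rewrite sum_delta_l mulrA crs2.
move=> k _; rewrite braket_outer !fC braketZr braketZl won conjc_real; by rewrite [cr _ * _]mulrC -mulrA.
Qed.

Lemma rho_right n : rho th *m ww n = cr (pr n th) *: ww n.
Proof.
rewrite rho_th mulmx_suml.
rewrite (eq_bigr (fun k => (cr (s k) * (cr (s k) * (if k == n then 1 else 0))) *: ww k)); last first.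
  move=> k _; rewrite -mulmxA fC.
  have -> : mxadj (cr (s k) *: ww k) *m ww n = (cr (s k) * (if k == n then 1 else 0))%:M.
    apply/matrixP => a b; rewrite !ord1 [RHS]mxE /= mulr1n; change (braket (cr (s k) *: ww k) (ww n) = cr (s k) * (if k == n then 1 else 0)); by rewrite braketZl conjc_real won.
  by rewrite mul_mx_scalar scalerA [_ * cr (s k)]mulrC.
rewrite (bigD1 n) //= eqxx mulr1 crs2 big1 ?addr0 // => k /negPf ->.
by rewrite !mulr0 scale0r.
Qed.

Definition Am j m n := braket (ww m) (vv j n).
Definition Lm j m n := braket (ww m) (lam j *m ww n).
Definition Gm j m n := braket (ww m) (Ww j n).

Lemma hA0' j m n : pr n th = 0 -> Am j m n = 0.
Proof. by move=> h; rewrite /Am v0 // braket0r. Qed.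

Lemma hLh' j m n : Lm j n m = conjc (Lm j m n).
Proof.
by rewrite /Lm braket_mulr (proj1 (hSLD j)) braket_conj.
Qed.


Lemma hL' j m n : Complex (pr m th + pr n th) 0 * Lm j m n =
  2%:R * (Complex (s n) 0 * Am j m n + Complex (s m) 0 * conjc (Am j n m)).
Proof.
have e1 : braket (ww m) (pderM rho th j *m ww n) = cr (s n) * Am j m n + cr (s m) * conjc (Am j n m).
  rewrite drho mulmx_suml braket_sumr.
  rewrite (eq_bigr (fun k => (Am j m k * cr (s k)) * (if k == n then 1 else 0)
                  + (if m == k then 1 else 0) * (cr (s k) * conjc (Am j n k)))); last first.
    move=> k _; rewrite mulmxDl braketDr !braket_outer !fC braketZl braketZr !won conjc_real.
    rewrite -(braket_conj (ww n)) /Am.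
    by congr (_ + _); [exact: mulrA | rewrite [cr _ * _]mulrC -mulrA].
  rewrite big_split /= sum_delta_r sum_delta_l.
  by rewrite mulrC.
have e2 : braket (ww m) (pderM rho th j *m ww n) =
    (2%:R : R[i])^-1 * (cr (pr m th) * Lm j m n + cr (pr n th) * Lm j m n).
  rewrite (proj2 (hSLD j)) -scalemxAl braketZr mulmxDl braketDr.
  rewrite -[rho th *m lam j *m ww n]mulmxA rho_left.
  rewrite -[lam j *m rho th *m ww n]mulmxA rho_right -scalemxAr braketZr.
  by [].
by rewrite !complexr0 -e1 e2 rmorphD /= mulrA divff ?mul1r ?mulrDl //.
Qed.


Lemma Re_crM (a : R) (z : R[i]) : complex.Re (cr a * z) = a * complex.Re z.
Proof. rewrite -complexr0; case: z => x y /=; ring. Qed.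

Lemma tr_sum (I : Type) (r : seq I) (F : I -> 'M[R[i]]_D) :
  \tr (\sum_(i <- r) F i) = \sum_(i <- r) \tr (F i).
Proof.
elim: r => [|x r IH]; first by rewrite !big_nil mxtrace0.
by rewrite !big_cons mxtraceD IH.
Qed.

Lemma conj_crM (a : R) (z : R[i]) : conjc (cr a * z) = cr a * conjc z.
Proof.
rewrite -complexr0; case: z => x y /=; apply/eqP; rewrite eq_complex /=; apply/andP; split; apply/eqP; ring.
Qed.

Lemma C_expr j k : SM_bound Ups (pure_state psi0) th j k =
  4%:R * \sum_l \sum_m complex.Re (conjc (Am k m l) * Am j m l).
Proof.
rewrite mxE; congr (_ * _); apply: eq_bigr => l _.
rewrite /pure_state trace_outer braket_mulr mxadjK (parseval won) Re_sum.
by [].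
Qed.

Lemma H_expr j k : SLD_info (rho th) lam j k =
  \sum_n \sum_m pr n th * complex.Re (conjc (Lm k m n) * Lm j m n).
Proof.
rewrite mxE rho_th mulmx_sumr mulmx_suml tr_sum Re_sum; apply: eq_bigr => n _.
rewrite trace_outer braket_mulr (proj1 (hSLD k)) (parseval won) Re_sum.
apply: eq_bigr => m _.
rewrite fC -!scalemxAr !braketZr conj_crM.
rewrite -Re_crM -crs2; congr (complex.Re _).
rewrite /Lm; ring.
Qed.


Lemma E_pos j m n : 0 < pr m th -> 0 < pr n th ->
  Ecore (fun n => s n) Am j m n = 2%:R * cr (s m) * cr (s n) * Gm j m n.
Proof.
move=> pm pn; have hn := vpos j pn; have hm := vpos j pm.
have := anti j m n.
rewrite /Ecore /Am /Gm hn hm !braketDr !braketZr !won -!complexr0.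
case: eqVneq => [<-|mn].
  rewrite ?eqxx.
  case: (braket (ww m) (Ww j m)) => g1 g2 /=.
  move/eqP; rewrite eq_complex /= => /andP[/eqP a1 _].
  have g0 : g1 = 0 by lra.
  apply/eqP; rewrite eq_complex /=; apply/andP; split; apply/eqP; rewrite g0; ring.
rewrite ?(eq_sym n m) ?(negPf mn).
case: (braket (ww m) (Ww j n)) => g1 g2; case: (braket (ww n) (Ww j m)) => h1 h2 /=.
move/eqP; rewrite eq_complex /= => /andP[/eqP a1 /eqP a2].
have e1 : h1 = - g1 by lra.
have e2 : h2 = g2 by lra.
apply/eqP; rewrite eq_complex /=; apply/andP; split; apply/eqP; rewrite e1 e2; ring.
Qed.

Lemma E_zero j m n : (pr m th = 0 \/ pr n th = 0) -> Ecore (fun n => s n) Am j m n = 0.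
Proof.
rewrite /Ecore; case=> h.
  by rewrite (@hA0' j n m h) h sqrtr0 !complexr0 rmorph0 ?mul0r ?conjc0 ?mulr0 ?subr0.
by rewrite (@hA0' j m n h) h sqrtr0 !complexr0 rmorph0 ?mul0r ?mulr0 ?subr0.
Qed.


Lemma quad_form (M : 'M[R]_p) (x : 'rV[R]_p) :
  (x *m M *m x^T) 0 0 = \sum_j \sum_k x 0 j * M j k * x 0 k.
Proof.
rewrite mxE exchange_big /=; apply: eq_bigr => k _.
rewrite mxE mulr_suml; apply: eq_bigr => j _; by rewrite !mxE.
Qed.

Lemma subE (A B : 'M[R]_p) j k : (A - B) j k = A j k - B j k.
Proof. by rewrite !mxE. Qed.

Lemma CH j k : SM_bound Ups (pure_state psi0) th j k - SLD_info (rho th) lam j k =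
  \sum_m \sum_n 2%:R * complex.Re (conjc (Ecore (fun n => s n) Am k m n)
                     * Ecore (fun n => s n) Am j m n) / (pr m th + pr n th).
Proof.
rewrite C_expr H_expr.
exact: (core_id j k (fun n => pr_sq n) (@hA0') hL' hLh').
Qed.

Lemma pos_or_zero k : pr k th = 0 \/ 0 < pr k th.
Proof. by have := pr_ge0 k; rewrite le_eqVlt => /orP[/eqP <-|]; [left|right]. Qed.

Lemma main_res :
  let H := SLD_info (rho th) lam in let C := SM_bound Ups (pure_state psi0) th in
  psd_le H C /\
  (H = C <-> (forall (l : 'I_p) (j k : 'I_D), 0 < pr j th -> 0 < pr k th ->
        braket (pderM (w j) th l) (w k th) = 0)).
Proof.
move=> H C.
have q0 : forall m n, 0 <= pr m th + pr n th.
  by move=> m n; apply: addr_ge0; apply: pr_ge0.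
split.
  move=> x; rewrite quad_form.
  rewrite (eq_bigr (fun j => \sum_k x 0 j * (C j k - H j k) * x 0 k)); last first.
    by move=> j _; apply: eq_bigr => k _; rewrite subE.
  rewrite /C /H.
  under eq_bigr do under eq_bigr do rewrite CH.
  exact: (psd_core _ (fun j => x 0 j) q0).
split.
  move=> HC l j k pj pk.
  have sum0 := CH l l.
  rewrite -/H -/C -HC subrr in sum0.
  have := zero_core q0 (esym sum0) (m := k) (n := j).
  rewrite (E_pos l pk pj) => /(_ (lt0r_neq0 (addr_gt0 pk pj))) /eqP.
  have sk : Num.sqrt (pr k th) != 0 by rewrite sqrtr_eq0 -ltNge.
  have sj : Num.sqrt (pr j th) != 0 by rewrite sqrtr_eq0 -ltNge.
  rewrite !mulf_eq0 pnatr_eq0 !fmorph_eq0 (negPf sk) (negPf sj) /= => /eqP G0.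
  by rewrite -braket_conj -/(Gm l k j) G0 conjc0.
move=> hc; apply/matrixP => j k; apply/eqP; rewrite eq_sym -subr_eq0; apply/eqP.
rewrite /C /H CH; apply: eq_core => m n qn.
case: (pos_or_zero m) => pm; first by apply: E_zero; left.
case: (pos_or_zero n) => pn; first by apply: E_zero; right.
rewrite (E_pos j pm pn) /Gm -braket_conj (hc j n m pn pm) conjc0.
by rewrite mulr0.
Qed.

End Main.

Unset Implicit Arguments.

Theorem theorem2p9 (R : realType) (p D : nat) (Theta : set 'rV[R]_p)
  (Ups : 'I_D -> 'rV[R]_p -> 'M[R[i]]_D) (psi0 : 'cV[R[i]]_D)
  (pr : 'I_D -> 'rV[R]_p -> R) (w : 'I_D -> 'rV[R]_p -> 'cV[R[i]]_D) :
  (0 < D)%N ->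
  open Theta ->
  (* |psi0> is a unit vector *)
  mxadj psi0 *m psi0 = 1%:M ->
  (* differentiability of the Kraus operators and of the basis w_k *)
  (forall k th, Theta th -> cmx_differentiable (Ups k) th) ->
  (forall k th, Theta th -> cmx_differentiable (w k) th) ->
  (* trace preservation *)
  (forall th, Theta th ->
     \sum_(k < D) (mxadj (Ups k th) *m Ups k th) = 1%:M) ->
  (* canonical Kraus operators *)
  (forall th j k, Theta th ->
     \tr (Ups k th *m pure_state psi0 *m mxadj (Ups j th))
       = (if j == k then Complex (pr k th) 0 else 0)) ->
  (* Ups_k |psi0> = sqrt(p_k) |w_k>, {w_k} orthonormal basis *)
  (forall th k, Theta th ->
     Ups k th *m psi0 = Complex (Num.sqrt (pr k th)) 0 *: w k th) ->
  (forall th j k, Theta th ->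
     braket (w j th) (w k th) = (if j == k then 1 else 0)) ->
  (* each p_k is identically zero or strictly positive on Theta *)
  (forall k, (forall th, Theta th -> pr k th = 0) \/
             (forall th, Theta th -> 0 < pr k th)) ->
  forall th, Theta th ->
  forall lam : 'I_p -> 'M[R[i]]_D,
    (forall j, is_SLD (out_state Ups (pure_state psi0)) th j (lam j)) ->
    let H := SLD_info (out_state Ups (pure_state psi0) th) lam in
    let C := SM_bound Ups (pure_state psi0) th in
    psd_le H C /\
    (H = C <->
     (forall (l : 'I_p) (j k : 'I_D), 0 < pr j th -> 0 < pr k th ->
        braket (pderM (w j) th l) (w k th) = 0)).
Proof.
move=> _ hTh _ hUd hwd _ _ hUw hwon hpk th thT lam hSLD.
exact: (main_res hTh hUd hwd hUw hwon hpk thT hSLD).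
Qed.
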